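(* Let $L$ be an i--lattice and let $\theta\in{\rm Con}(L)$ be such that every $\alpha\in{\rm Con}(L)$ satisfies $\alpha\subseteq\theta$ or $\theta\subseteq\alpha$. Then $\theta\in{\rm Con}_{\mathbb{I}}(L)$.
   Context: An i--lattice is a lattice $L$ with a unary operation $'$ such that $a''=a$ and $a\leq b$ implies $b'\leq a'$ for all $a,b\in L$. ${\rm Con}(L)$ is the lattice of lattice congruences of $L$, and ${\rm Con}_{\mathbb{I}}(L)$ is the set of lattice congruences $\theta$ that also preserve the involution, i.e. $(a,b)\in\theta$ implies $(a',b')\in\theta$. *)

(* Defs.v *)
From HB Require Import structures.
From mathcomp Require Import all_boot all_order.
Set Implicit Arguments. Unset Strict Implicit. Unset Printing Implicit Defensive.
Import Order.TTheory.
Local Open Scope order_scope.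

Definition is_ilattice_inv (d : Order.disp_t) (L : latticeType d) (inv : L -> L) : Prop :=
  (forall a : L, inv (inv a) = a) /\
  (forall a b : L, a <= b -> inv b <= inv a).

Definition lattice_congruence (d : Order.disp_t) (L : latticeType d) (th : L -> L -> Prop) : Prop :=
  (forall a : L, th a a) /\
  (forall a b : L, th a b -> th b a) /\
  (forall a b c : L, th a b -> th b c -> th a c) /\
  (forall a b c e : L, th a b -> th c e -> th (a `&` c) (b `&` e)) /\
  (forall a b c e : L, th a b -> th c e -> th (a `|` c) (b `|` e)).

Definition rel_sub (T : Type) (al th : T -> T -> Prop) : Prop :=
  forall a b : T, al a b -> th a b.

Definition ilattice_congruence (d : Order.disp_t) (L : latticeType d) (inv : L -> L)
  (th : L -> L -> Prop) : Prop :=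
  lattice_congruence th /\ (forall a b : L, th a b -> th (inv a) (inv b)).

(* Main.v *)
Require Import Defs.
From HB Require Import structures.
From mathcomp Require Import all_boot all_order.
Import Order.TTheory.
Local Open Scope order_scope.

Lemma inv_meet (d : Order.disp_t) (L : latticeType d) (inv : L -> L)
  (hinv : is_ilattice_inv inv) (a b : L) : inv (a `&` b) = inv a `|` inv b.
Proof.
case: hinv => K M; apply: le_anti; apply/andP; split; last first.
  by rewrite leUx !M ?leIl ?leIr.
have H : inv (inv a `|` inv b) <= a `&` b.
  rewrite lexI; apply/andP; split.
    by rewrite -[X in _ <= X](K a); apply: M; exact: leUl.
  by rewrite -[X in _ <= X](K b); apply: M; exact: leUr.
by rewrite -(K (inv a `|` inv b)) M.
Qed.

Lemma inv_join (d : Order.disp_t) (L : latticeType d) (inv : L -> L)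
  (hinv : is_ilattice_inv inv) (a b : L) : inv (a `|` b) = inv a `&` inv b.
Proof.
case: hinv => K M; apply: le_anti; apply/andP; split.
  by rewrite lexI !M ?leUl ?leUr.
have H : a `|` b <= inv (inv a `&` inv b).
  rewrite leUx; apply/andP; split.
    by rewrite -[X in X <= _](K a); apply: M; exact: leIl.
  by rewrite -[X in X <= _](K b); apply: M; exact: leIr.
by rewrite -(K (inv a `&` inv b)) M.
Qed.

Theorem proposition4p6 (d : Order.disp_t) (L : latticeType d) (inv : L -> L)
  (hinv : is_ilattice_inv inv) (theta : L -> L -> Prop)
  (htheta : lattice_congruence theta)
  (hcomp : forall alpha : L -> L -> Prop, lattice_congruence alpha ->
             rel_sub alpha theta \/ rel_sub theta alpha) :
  ilattice_congruence inv theta.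
Proof.
split => //.
have K := proj1 hinv.
case: htheta => [R [S [T [Mm Jj]]]].
have C : lattice_congruence (fun a b => theta (inv a) (inv b)).
  split; first by [].
  split; first by move=> a b; apply: S.
  split; first by move=> a b c; apply: T.
  split=> a b c e h1 h2; rewrite ?inv_meet ?inv_join //.
    by apply: Jj.
  by apply: Mm.
case: (hcomp _ C) => H a b hab.
  by apply: H; rewrite !K.
by apply: H.
Qed.
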